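(* Let $x_i,y_i\in K_i$ for each $1\le i\le N$. Then: (i) $\lim_{m\to-\infty}d\big(Y^{x_1\dots x_N}_{m0}(\sigma),Y^{y_1\dots y_N}_{m0}(\sigma)\big)=0$ for all $\sigma$ outside a set of $P_{x_1\dots x_N}$-outer measure zero; (ii) the limit $F_{x_1\dots x_N}(\sigma):=\lim_{m\to-\infty}Y^{x_1\dots x_N}_{m0}(\sigma)$ exists for all $\sigma$ outside a set of $P_{x_1\dots x_N}$-outer measure zero, and $F_{x_1\dots x_N}=F_{y_1\dots y_N}$ outside a set of $P_{x_1\dots x_N}$-outer measure zero; (iii) there exist closed subsets $Q_1\subset Q_2\subset\cdots\subset\Sigma$ with $\sum_{k=1}^\infty P_{x_1\dots x_N}(\Sigma\setminus Q_k)<\infty$, and constants $\alpha,C>0$, such that for every $k$ there exists $\delta_k>0$ with: $F_{x_1\dots x_N}$ is defined on $Q_k$ and for all $\sigma,\sigma'\in Q_k$ with $d'(\sigma,\sigma')\le\delta_k$, $d(F_{x_1\dots x_N}(\sigma),F_{x_1\dots x_N}(\sigma'))\le C\,d'(\sigma,\sigma')^\alpha$.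
   Context: A contractive Markov system (CMS) with average contracting rate $0<a<1$ consists of: a finite directed multigraph $(V,E,i,t)$ with vertex set $V=\{1,\dots,N\}$, finite edge set $E$, and maps $i,t:E\to V$ giving the initial and terminal vertex of each edge; a complete metric space $(K,d)$ partitioned into non-empty Borel sets $K_1,\dots,K_N$; Borel measurable maps $w_e:K\to K$ ($e\in E$) with $w_e(K_{i(e)})\subset K_{t(e)}$; Borel measurable functions $p_e:K\to[0,\infty)$ with $\sum_{e\in E}p_e(x)=1$ for all $x\in K$ and $p_e=0$ on $K\setminus K_{i(e)}$; and such that $\sum_{e\in E}p_e(x)d(w_ex,w_ey)\leq a\,d(x,y)$ for all $x,y\in K_j$, $j=1,\dots,N$. No further conditions are imposed on the graph. Let $\Sigma:=E^{\mathbb{Z}}$ with metric $d'(\sigma,\sigma'):=(1/2)^k$ where $k$ is the largest integer with $\sigma_j=\sigma'_j$ for all $|j|<k$. For $m\le n$ the cylinder $_m[e_m,\dots,e_n]:=\{\sigma\in\Sigma:\sigma_j=e_j,\ m\le j\le n\}$. For an integer $m\le 1$, $\mathcal{A}_m$ is the $\sigma$-algebra generated by the cylinders $_m[e_m,\dots,e_n]$, $n\ge m$. For $x\in K$, $P^m_x$ is the probability measure on $(\Sigma,\mathcal{A}_m)$ with $P^m_x(_m[e_m,\dots,e_n])=p_{e_m}(x)\,p_{e_{m+1}}(w_{e_m}x)\cdots p_{e_n}(w_{e_{n-1}}\circ\cdots\circ w_{e_m}x)$. For a Borel probability measure $\nu$ on $K$, $\Phi_m(\nu)(A)=\int P^m_x(A)\,d\nu(x)$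 for $A\in\mathcal{A}_m$. For $B\subset\Sigma$ let $\mathcal{C}(B)$ be the set of sequences $(A_m)_{m\le 0}$ with $A_m\in\mathcal{A}_m$ and $B\subset\bigcup_{m\le 0}A_m$, and $\Phi(\nu)(B):=\inf\{\sum_{m\le 0}\Phi_m(\nu)(A_m):(A_m)_{m\le0}\in\mathcal{C}(B)\}$ (an outer measure on $\Sigma$). Fix $x_i\in K_i$, $i=1,\dots,N$, and set $P^m_{x_1\dots x_N}:=\Phi_m\big(\frac1N\sum_{i=1}^N\delta_{x_i}\big)$ and $P_{x_1\dots x_N}:=\Phi\big(\frac1N\sum_{i=1}^N\delta_{x_i}\big)$, where $\delta_x$ is the Dirac measure at $x$. For $m\le 0$ and $n\ge m$ define $Y^{x_1\dots x_N}_{mn}:\Sigma\to K$ by $Y^{x_1\dots x_N}_{mn}(\sigma):=w_{\sigma_n}\circ w_{\sigma_{n-1}}\circ\cdots\circ w_{\sigma_m}(x_{i(\sigma_m)})$. *)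

(* Defs.v *)
From HB Require Import structures.
From mathcomp Require Import all_boot all_order all_algebra.
From mathcomp Require Import all_classical all_reals all_analysis.
Set Implicit Arguments. Unset Strict Implicit. Unset Printing Implicit Defensive.
Import Order.TTheory GRing.Theory Num.Theory numFieldNormedType.Exports.
Local Open Scope classical_set_scope.
Local Open Scope ring_scope.

Section Metric.
Variables (R : realType) (K : Type) (d : K -> K -> R).

Definition is_metric : Prop :=
  (forall x y, 0 <= d x y) /\ (forall x y, d x y = 0 <-> x = y) /\
  (forall x y, d x y = d y x) /\ (forall x y z, d x z <= d x y + d y z).

Definition mconv (u : nat -> K) (l : K) : Prop :=
  forall e : R, 0 < e -> exists M : nat, forall n, (M <= n)%N -> d (u n) l < e.

Definition mcauchy (u : nat -> K) : Prop :=
  forall e : R, 0 < e -> exists M : nat, forall n k, (M <= n)%N -> (M <= k)%N ->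
    d (u n) (u k) < e.

Definition mcomplete : Prop := forall u, mcauchy u -> exists l, mconv u l.

Definition mopen (A : set K) : Prop :=
  forall x, A x -> exists2 e : R, 0 < e & forall y, d x y < e -> A y.

Definition mborel : set (set K) := <<s mopen >>.

Definition mclosed (A : set K) : Prop :=
  forall x, (forall e : R, 0 < e -> exists2 y, A y & d x y < e) -> A x.
End Metric.

(* vertices V = {1..N} are represented by 'I_N ; edges by a finType E *)
Record CMS (R : realType) (K : Type) (E : finType) (N : nat) := {
  cms_d : K -> K -> R;
  cms_Kp : 'I_N -> set K;
  cms_i : E -> 'I_N;                 (* initial vertex *)
  cms_t : E -> 'I_N;                 (* terminal vertex *)
  cms_w : E -> K -> K;
  cms_p : E -> K -> R;
  cms_a : R;
  cms_metric : is_metric cms_d;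
  cms_complete : mcomplete cms_d;
  cms_Kp_nonempty : forall j, cms_Kp j !=set0;
  cms_Kp_borel : forall j, mborel cms_d (cms_Kp j);
  cms_Kp_cover : \bigcup_j cms_Kp j = setT;
  cms_Kp_disj : forall j k, j != k -> cms_Kp j `&` cms_Kp k = set0;
  cms_w_borel : forall e B, mborel cms_d B -> mborel cms_d (cms_w e @^-1` B);
  cms_w_maps : forall e, cms_w e @` cms_Kp (cms_i e) `<=` cms_Kp (cms_t e);
  cms_p_borel : forall e (B : set R), measurable B ->
                  mborel cms_d (cms_p e @^-1` B);
  cms_p_ge0 : forall e x, 0 <= cms_p e x;
  cms_p_sum1 : forall x, \sum_(e : E) cms_p e x = 1;
  cms_p_supp : forall e x, ~ cms_Kp (cms_i e) x -> cms_p e x = 0;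
  cms_a_gt0 : 0 < cms_a;
  cms_a_lt1 : cms_a < 1;
  cms_contr : forall j x y, cms_Kp j x -> cms_Kp j y ->
     \sum_(e : E) cms_p e x * cms_d (cms_w e x) (cms_w e y) <= cms_a * cms_d x y
}.

Definition Sig (E : Type) := int -> E.

Definition agree_upto (E : Type) (s s' : Sig E) (k : nat) : Prop :=
  forall j : int, (`|j| < k)%N -> s j = s' j.

(* d'(s,s') = (1/2)^k, k the largest integer with s_j = s'_j for |j| < k;
   d'(s,s) = 0. *)
Definition dsig (R : realType) (E : Type) (s s' : Sig E) : R :=
  match pselect (exists n : nat, ~ agree_upto s s' n.+1) with
  | left h =>
      (2^-1) ^+ (ex_minn (P := fun n => ~~ `[< agree_upto s s' n.+1 >])
                   (let: ex_intro n hn := h in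
                    ex_intro _ n (introN (asboolP _) hn)))
  | right _ => 0
  end.

Definition sig_closed (R : realType) (E : Type) (Q : set (Sig E)) : Prop :=
  forall s, (forall eps : R, 0 < eps -> exists2 s', Q s' & dsig R s s' < eps) -> Q s.

(* cylinder  _m[e_m, ..., e_n]  with [:: e_m; ...; e_n] = l (non-empty) *)
Definition cyl (E : Type) (m : int) (l : seq E) : set (Sig E) :=
  [set s | forall j : nat, (j < size l)%N -> Some (s (m + j%:Z)%R) = onth l j].

Definition Asig (E : Type) (m : int) : set (set (Sig E)) :=
  <<s [set cyl m (e :: l) | e in [set: E] & l in [set: seq E]] >>.

Section CMSdefs.
Variables (R : realType) (K : Type) (E : finType) (N : nat) (M : CMS R K E N).
Local Notation w := (cms_w M).
Local Notation p := (cms_p M).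

Fixpoint pcyl (x : K) (l : seq E) : R :=
  if l is e :: l' then p e x * pcyl (w e x) l' else 1.

(* Pm m x is the probability measure P^m_x on (Sigma, A_m) *)
Definition is_Pfamily (Pm : int -> K -> set (Sig E) -> \bar R) : Prop :=
  forall (m : int) (x : K), (m <= 0)%R ->
    [/\ Pm m x set0 = 0%E,
        (forall A, Asig m A -> (0 <= Pm m x A)%E),
        (forall F : nat -> set (Sig E), (forall n, Asig m (F n)) ->
            trivIset setT F ->
            (fun n => \sum_(k < n) Pm m x (F k))%E @ \oo --> Pm m x (\bigcup_n F n)),
        Pm m x setT = 1%E &
        (forall e l, Pm m x (cyl m (e :: l)) = (pcyl x (e :: l))%:E)].

(* Phi_m((1/N) sum_i delta_{x_i})(A) = int P^m_x(A) d nu(x) *)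
Definition Phim (Pm : int -> K -> set (Sig E) -> \bar R) (xs : 'I_N -> K)
  (m : int) (A : set (Sig E)) : \bar R :=
  ((N%:R)^-1)%:E * (\sum_(i < N) Pm m (xs i) A)%E.

(* the outer measure P_{x_1...x_N} = Phi((1/N) sum_i delta_{x_i});
   the cover (A_m)_{m <= 0} is indexed by n : nat with m = -n *)
Definition Pout (Pm : int -> K -> set (Sig E) -> \bar R) (xs : 'I_N -> K)
  (B : set (Sig E)) : \bar R :=
  ereal_inf [set (\sum_(0 <= n <oo) Phim Pm xs (- n%:Z) (A n))%E
            | A in [set A : nat -> set (Sig E) |
                     (forall n, Asig (- n%:Z) (A n)) /\ B `<=` \bigcup_n A n]].

Fixpoint Yit (xs : 'I_N -> K) (m : int) (k : nat) (s : Sig E) : K :=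
  match k with
  | 0 => w (s m) (xs (cms_i M (s m)))
  | k'.+1 => w (s (m + k%:Z)%R) (Yit xs m k' s)
  end.

(* Y^{x_1..x_N}_{m0} with m = -n, n : nat *)
Definition Y0 (xs : 'I_N -> K) (n : nat) (s : Sig E) : K := Yit xs (- n%:Z) n s.

End CMSdefs.

(* Main.v *)
Require Import Defs.
From HB Require Import structures.
From mathcomp Require Import all_boot all_order all_algebra.
From mathcomp Require Import all_classical all_reals all_analysis.
From mathcomp Require Import ring lra zify.
Import Order.TTheory GRing.Theory Num.Theory numFieldNormedType.Exports.
Local Open Scope classical_set_scope.
Local Open Scope ring_scope.
Set Implicit Arguments. Unset Strict Implicit. Unset Printing Implicit Defensive.

Section Part1.
Variables (R : realType) (K : Type) (E : finType) (N : nat) (M : CMS R K E N).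
Local Notation d := (cms_d M).
Local Notation w := (cms_w M).
Local Notation p := (cms_p M).
Local Notation Kp := (cms_Kp M).
Local Notation a := (cms_a M).

Fixpoint words (k : nat) : seq (seq E) :=
  if k is k'.+1 then [seq e :: l | e <- index_enum E, l <- words k'] else [:: [::]].

Lemma mem_words k l : (l \in words k) = (size l == k).
Proof.
elim: k l => [|k IH] [|e l] //=.
- by apply/negbTE/allpairsP => -[[x y] /= [_ _ ]].
- apply/allpairsP/idP => [[[x y] /= [_ hy [_ ->]]]|hl].
    by rewrite eqSS -IH.
  by exists (e, l); rewrite /= mem_index_enum IH.
Qed.

Lemma uniq_words k : uniq (words k).
Proof.
elim: k => [|k IH] //=.
apply: allpairs_uniq => //; first exact: index_enum_uniq.
by move=> [x y] [x' y'] _ _ /= [-> ->].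
Qed.

Lemma sum_wordsS k (F : seq E -> R) :
  \sum_(l <- words k.+1) F l = \sum_(e : E) \sum_(l <- words k) F (e :: l).
Proof. by rewrite /= big_allpairs_dep. Qed.

Lemma pcyl_ge0 x l : 0 <= pcyl M x l.
Proof.
elim: l x => [|e l IH] x /=; first exact: ler01.
by rewrite mulr_ge0 // cms_p_ge0.
Qed.

Definition run (z : K) (l : seq E) : K := foldl (fun z e => w e z) z l.

Lemma Kp_uniq j j' x : Kp j x -> Kp j' x -> j = j'.
Proof.
move=> h h'; apply/eqP; apply/negPn/negP => /(cms_Kp_disj M) hd.
by have : (Kp j `&` Kp j') x by []; rewrite hd.
Qed.

Lemma p_supp e x : p e x != 0 -> Kp (cms_i M e) x.
Proof. move=> h; apply/not_notP => hn; move: h; by rewrite (cms_p_supp hn) eqxx. Qed.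

Lemma w_maps e x : Kp (cms_i M e) x -> Kp (cms_t M e) (w e x).
Proof. by move=> h; apply: cms_w_maps; exists x. Qed.

Lemma contr_sum n x y j : Kp j x -> Kp j y ->
  \sum_(l <- words n) pcyl M x l * d (run x l) (run y l) <= a ^+ n * d x y.
Proof.
elim: n x y j => [|n IH] x y j hx hy.
  by rewrite /= big_seq1 /= mul1r.
rewrite (sum_wordsS n).
apply: (@le_trans _ _ (\sum_(e : E) p e x * (a ^+ n * d (w e x) (w e y)))).
  apply: ler_sum => e _.
  rewrite (eq_bigr (fun l => p e x * (pcyl M (w e x) l * d (run (w e x) l) (run (w e y) l)))); last first.
    by move=> l _; rewrite mulrA.
  rewrite -big_distrr /=.
  have [->|hpe] := eqVneq (p e x) 0; first by rewrite !mul0r.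
  apply: ler_wpM2l; first exact: cms_p_ge0.
  have hxe := p_supp hpe.
  have ej := Kp_uniq hx hxe; subst j.
  exact: (IH _ _ (cms_t M e) (w_maps hxe) (w_maps hy)).
rewrite (eq_bigr (fun e => a ^+ n * (p e x * d (w e x) (w e y)))); last first.
  by move=> e _; rewrite mulrCA.
rewrite -big_distrr /= exprS -mulrA [X in _ <= X]mulrCA.
apply: ler_wpM2l; first by rewrite exprn_ge0 // ltW // cms_a_gt0.
exact: (cms_contr hx hy).
Qed.


Definition wd (m : int) (k : nat) (s : Sig E) : seq E :=
  [seq s (m + j%:Z) | j <- iota 0 k].

Definition wset (m : int) (k : nat) (P : pred (seq E)) : set (Sig E) :=
  [set s | P (wd m k s)].

Lemma size_wd m k s : size (wd m k s) = k.
Proof. by rewrite size_map size_iota. Qed.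

Lemma cyl_wd m l s : cyl m l s <-> wd m (size l) s = l.
Proof.
split.
  move=> h; apply: (@eq_from_nth _ (s m)); first by rewrite size_wd.
  move=> i; rewrite size_wd => hi.
  rewrite (nth_map 0%N) ?size_iota // nth_iota // add0n.
  by symmetry; apply: onth_nth; rewrite -h.
move=> h j hj; rewrite -h onthE (nth_map (s m)) ?size_wd //.
by rewrite (nth_map 0%N) ?size_iota // nth_iota.
Qed.

Variable Pm : int -> K -> set (Sig E) -> \bar R.
Hypothesis hP : is_Pfamily M Pm.

Section Meas.
Variables (m : int) (k : nat) (P : pred (seq E)).
Let ws := [seq l <- words k.+1 | P l].
Let F (j : nat) : set (Sig E) := if (j < size ws)%N then cyl m (nth [::] ws j) else set0.

Let wsP l : (l \in ws) = (P l && (size l == k.+1)).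
Proof. by rewrite mem_filter mem_words. Qed.

Let U : wset m k.+1 P = \bigcup_j F j.
Proof.
apply/seteqP; split => s.
  rewrite /wset /= => hs.
  have hin : wd m k.+1 s \in ws by rewrite wsP hs size_wd eqxx.
  exists (index (wd m k.+1 s) ws) => //.
  rewrite /F index_mem hin; apply/cyl_wd.
  by rewrite nth_index // size_wd.
move=> [j _]; rewrite /F /wset /=; case: ifP => // hj /cyl_wd.
have := mem_nth [::] hj; rewrite wsP => /andP [hPl /eqP ->] ->.
exact: hPl.
Qed.

Let Fmeas j : Asig m (F j).
Proof.
rewrite /F; case: ifP => hj; last exact: sigma_algebra0.
apply: sub_sigma_algebra.
have := mem_nth [::] hj; rewrite wsP => /andP [_].
case: (nth [::] ws j) => [//|e l] _.
by exists e => //; exists l.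
Qed.

Let Ftriv : trivIset setT F.
Proof.
move=> i j _ _ [s []]; rewrite /F.
case: ifP => hi; last by [].
case: ifP => hj; last by [].
move=> /cyl_wd h1 /cyl_wd h2.
have s1 : size (nth [::] ws i) = k.+1.
  by have := mem_nth [::] hi; rewrite wsP => /andP [_ /eqP].
have s2 : size (nth [::] ws j) = k.+1.
  by have := mem_nth [::] hj; rewrite wsP => /andP [_ /eqP].
rewrite s1 in h1; rewrite s2 in h2.
apply/eqP; rewrite -(nth_uniq [::] hi hj); last first.
  by apply: filter_uniq; exact: uniq_words.
by rewrite -h1 -h2.
Qed.

Lemma Asig_wset : Asig m (wset m k.+1 P).
Proof.
rewrite U; apply: sigma_algebra_bigcup.
exact: Fmeas.
Qed.

Lemma Pm_wset x : (m <= 0)%R ->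
  Pm m x (wset m k.+1 P) = (\sum_(l <- words k.+1 | P l) pcyl M x l)%:E.
Proof.
move=> hm; have [h0 hge hadd hT hcyl] := hP x hm.
have h1 := hadd F Fmeas Ftriv.
have h2 : (fun n => \sum_(j < n) Pm m x (F j))%E @ \oo -->
          (\sum_(j < size ws) Pm m x (F j))%E.
  apply: cvg_near_cst; near=> n.
  have hn : (size ws <= n)%N by near: n; exists (size ws).
  rewrite -(big_mkord xpredT (fun j => Pm m x (F j))).
  rewrite -(big_mkord xpredT (fun j => Pm m x (F j))).
  rewrite (big_cat_nat (leq0n (size ws)) hn) /=.
  rewrite [X in (_ + X)%E]big1_seq ?adde0 // => j /andP [_].
  rewrite mem_index_iota => /andP [hj _].
  by rewrite /F ltnNge hj /= h0.
rewrite U (cvg_unique (@ereal_hausdorff R) h1 h2) //.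
rewrite -sumEFin -[in RHS]big_filter -/ws [in RHS](big_nth [::]) [in RHS]big_mkord.
apply: eq_bigr => j _; rewrite /F ltn_ord.
have := mem_nth [::] (ltn_ord j); rewrite wsP => /andP [_].
by case: (nth [::] ws j) => [//|e l] _; rewrite hcyl.
Unshelve. all: by end_near.
Qed.
End Meas.


Lemma d_ge0 x y : 0 <= d x y.
Proof. by case: (cms_metric M). Qed.

Lemma a_gt0 : 0 < a. Proof. exact: cms_a_gt0. Qed.
Lemma a_lt1 : a < 1. Proof. exact: cms_a_lt1. Qed.

Lemma wdS m k s : wd m k.+1 s = s m :: wd (m + 1) k s.
Proof.
rewrite /wd /= addr0; congr (_ :: _).
rewrite -(addn0 1%N) iotaDl -map_comp; apply: eq_map => j /=.
by rewrite PoszD addrA.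
Qed.

Lemma wd_rcons m k s : wd m k.+1 s = rcons (wd m k s) (s (m + k%:Z)).
Proof. by rewrite /wd -addn1 iotaD map_cat /= cats1 add0n. Qed.

Section WithE0.
Variable e0 : E.

Definition Yw (us : 'I_N -> K) (l : seq E) : K := run (us (cms_i M (head e0 l))) l.

Lemma Yit_wd us m k s : Yit M us m k s = Yw us (wd m k.+1 s).
Proof.
elim: k => [|k IH].
  by rewrite /Yw /wd /= addr0.
rewrite [wd m k.+2 s]wd_rcons /Yw /run foldl_rcons -/(run _ _).
rewrite [Yit _ _ _ _ _]/= IH /Yw.
by rewrite wdS.
Qed.

Lemma Y0_wd us n s : Y0 M us n s = Yw us (wd (- n%:Z) n.+1 s).
Proof. exact: Yit_wd. Qed.

Variables (xs ys : 'I_N -> K).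
Hypothesis hxs : forall i, Kp i (xs i).
Hypothesis hys : forall i, Kp i (ys i).

Lemma nz_head z e l : pcyl M z (e :: l) != 0 -> Kp (cms_i M e) z.
Proof.
move=> h; apply: p_supp; apply: contraNneq h => /= ->; by rewrite mul0r.
Qed.

Lemma E1 i n : \sum_(l <- words n.+1) pcyl M (xs i) l * d (Yw xs l) (Yw ys l)
   <= a ^+ n.+1 * d (xs i) (ys i).
Proof.
rewrite (eq_big_seq (fun l => pcyl M (xs i) l * d (run (xs i) l) (run (ys i) l))).
  exact: (contr_sum n.+1 (hxs i) (hys i)).
move=> l; rewrite mem_words; case: l => [//|e l] _.
have [->|hnz] := eqVneq (pcyl M (xs i) (e :: l)) 0; first by rewrite !mul0r.
have ei := Kp_uniq (hxs i) (nz_head hnz).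
by rewrite /Yw /= -ei.
Qed.

Lemma E2 z j n : Kp j z ->
  \sum_(l <- words n.+1) pcyl M z l * d (run z l) (Yw xs l) <= a ^+ n.+1 * d z (xs j).
Proof.
move=> hz.
rewrite (eq_big_seq (fun l => pcyl M z l * d (run z l) (run (xs j) l))).
  exact: (contr_sum n.+1 hz (hxs j)).
move=> l; rewrite mem_words; case: l => [//|e l] _.
have [->|hnz] := eqVneq (pcyl M z (e :: l)) 0; first by rewrite !mul0r.
have ej := Kp_uniq hz (nz_head hnz).
by rewrite /Yw /= -ej.
Qed.

Definition Dc : R := \sum_(e : E) d (w e (xs (cms_i M e))) (xs (cms_t M e)).

Lemma E3 i n :
  \sum_(l <- words n.+2) pcyl M (xs i) l * d (Yw xs l) (Yw xs (behead l))
   <= a ^+ n.+1 * Dc.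
Proof.
rewrite (sum_wordsS n.+1).
apply: (@le_trans _ _ (\sum_(e : E) p e (xs i) * (a ^+ n.+1 * Dc))); last first.
  by rewrite -big_distrl /= (cms_p_sum1 M) mul1r.
apply: ler_sum => e _.
rewrite (eq_bigr (fun l => p e (xs i) * (pcyl M (w e (xs i)) l *
   d (run (w e (xs (cms_i M e))) l) (Yw xs l)))); last first.
  by move=> l _; rewrite /= mulrA.
rewrite -big_distrr /=.
have [->|hpe] := eqVneq (p e (xs i)) 0; first by rewrite !mul0r.
apply: ler_wpM2l; first exact: cms_p_ge0.
have hxe := p_supp hpe.
have ei := Kp_uniq (hxs i) hxe; rewrite -ei.
apply: le_trans (E2 n (w_maps hxe)) _.
apply: ler_wpM2l; first by rewrite exprn_ge0 // ltW // a_gt0.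
rewrite /Dc (bigD1 e) //= ei lerDl.
by apply: sumr_ge0 => ? _; exact: d_ge0.
Qed.

End WithE0.


Lemma markov x k (g : seq E -> R) c : 0 < c -> (forall l, 0 <= g l) ->
  \sum_(l <- words k | c < g l) pcyl M x l <=
  c^-1 * \sum_(l <- words k) pcyl M x l * g l.
Proof.
move=> c0 g0; rewrite big_mkcond big_distrr /=.
apply: ler_sum => l _; case: ifP => h.
  rewrite mulrCA; apply: ler_peMr; first exact: pcyl_ge0.
  by rewrite ler_pdivlMl // mulr1 ltW.
apply: mulr_ge0; first by rewrite invr_ge0 ltW.
apply: mulr_ge0; [exact: pcyl_ge0 | exact: g0].
Qed.

Lemma Phim_wset (us : 'I_N -> K) m k P c : (m <= 0)%R -> 0 <= c ->
  (forall i, \sum_(l <- words k.+1 | P l) pcyl M (us i) l <= c) ->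
  (Phim Pm us m (wset m k.+1 P) <= c%:E)%E.
Proof.
move=> hm c0 hb; rewrite /Phim.
under eq_bigr do rewrite Pm_wset //.
rewrite sumEFin -EFinM lee_fin.
apply: (@le_trans _ _ (N%:R^-1 * \sum_(i < N) c)).
  by apply: ler_wpM2l; [rewrite invr_ge0 ler0n | exact: ler_sum].
rewrite sumr_const card_ord -[c *+ N]mulr_natr mulrCA mulrC.
have h1 : N%:R^-1 * N%:R <= 1 :> R.
  have [->|hN] := eqVneq N 0%N; first by rewrite mulr0 ler01.
  by rewrite mulVf ?pnatr_eq0.
by rewrite -[X in _ <= X]mul1r ler_wpM2r.
Qed.

Lemma Phim_ge0 (us : 'I_N -> K) m A : (m <= 0)%R -> Asig m A -> (0 <= Phim Pm us m A)%E.
Proof.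
move=> hm hA; rewrite /Phim; apply: mule_ge0; first by rewrite lee_fin invr_ge0 ler0n.
by apply: sume_ge0 => i _; have [_ h _ _ _] := hP (us i) hm; exact: h.
Qed.

Lemma Pout_ge0 (us : 'I_N -> K) B : (0 <= Pout Pm us B)%E.
Proof.
apply/ereal_infP => y [A [hA _] <-].
apply: nneseries_ge0 => n _ _; apply: Phim_ge0 => //; rewrite ?oppr_le0 //.
Qed.

Lemma Pout_le (us : 'I_N -> K) B (A : nat -> set (Sig E)) :
  (forall n, Asig (- n%:Z) (A n)) -> B `<=` \bigcup_n A n ->
  (Pout Pm us B <= \sum_(0 <= n <oo) Phim Pm us (- n%:Z) (A n))%E.
Proof. by move=> hA hB; apply: ereal_inf_lbound; exists A. Qed.

Lemma Pout_eq0 (us : 'I_N -> K) B :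
  (forall eps : R, 0 < eps -> (Pout Pm us B <= eps%:E)%E) -> Pout Pm us B = 0%E.
Proof.
move=> h; apply/eqP; rewrite eq_le Pout_ge0 andbT.
by apply/lee_addgt0Pr => e e0; rewrite add0e; exact: h.
Qed.

Lemma geo_partial (C b : R) M0 n : 0 <= C -> 0 < b -> b < 1 ->
  (1 - b) * \sum_(0 <= k < n) (if (M0 <= k)%N then C * b ^+ k else 0)
  = if (M0 <= n)%N then C * (b ^+ M0 - b ^+ n) else 0.
Proof.
move=> C0 b0 b1; elim: n => [|n IH].
  rewrite big_geq // mulr0; case: M0 => //=. by rewrite subrr mulr0.
rewrite big_nat_recr //= mulrDr IH.
case: (ltngtP M0 n) => h.
- rewrite (leq_trans (ltnW h) (leqnSn n)) exprS; ring.
- case: ifP => h2; last by rewrite mulr0 addr0.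
  have -> : M0 = n.+1 by apply/eqP; rewrite eqn_leq h2 h.
  by rewrite subrr !mulr0 addr0.
- subst M0; rewrite leqnSn exprS subrr; ring.
Qed.

Lemma series_geo_le (f : nat -> \bar R) (C b : R) M0 : 0 <= C -> 0 < b -> b < 1 ->
  (forall n, 0 <= f n)%E ->
  (forall n, f n <= (if (M0 <= n)%N then C * b ^+ n else 0)%:E)%E ->
  (\sum_(0 <= n <oo) f n <= (C * b ^+ M0 / (1 - b))%:E)%E.
Proof.
move=> C0 b0 b1 f0 fb.
apply: lime_le; first by apply: is_cvg_nneseries => n _ _; exact: f0.
apply: nearW => n.
apply: (@le_trans _ _ (\sum_(0 <= k < n) (if (M0 <= k)%N then C * b ^+ k else 0)%:E)%E).
  by apply: lee_sum => k _; exact: fb.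
rewrite sumEFin lee_fin.
have hb : 0 < 1 - b by rewrite subr_gt0.
rewrite ler_pdivlMr // mulrC geo_partial //.
case: ifP => _; last by rewrite mulr_ge0 // exprn_ge0 // ltW.
rewrite ler_wpM2l // lerBlDr lerDl exprn_ge0 // ltW //.
Qed.


Lemma sum_andb (s : seq (seq E)) (c : bool) (P : pred (seq E)) (F : seq E -> R) :
  \sum_(l <- s | c && P l) F l = if c then \sum_(l <- s | P l) F l else 0.
Proof. by case: c => //; rewrite big_pred0. Qed.

Lemma sum_orb_le (s : seq (seq E)) (P Q : pred (seq E)) (F : seq E -> R) :
  (forall l, 0 <= F l) ->
  \sum_(l <- s | P l || Q l) F l <= \sum_(l <- s | P l) F l + \sum_(l <- s | Q l) F l.
Proof.
move=> F0; rewrite !(big_mkcond (fun l => _ || _)) (big_mkcond P) (big_mkcond Q) -big_split /=.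
apply: ler_sum => l _; case: (P l); case: (Q l) => //=; rewrite ?addr0 ?add0r //.
by rewrite lerDl.
Qed.

Definition b : R := Num.sqrt a.
Lemma b_gt0 : 0 < b. Proof. by rewrite sqrtr_gt0 a_gt0. Qed.
Lemma b_lt1 : b < 1.
Proof. by rewrite -sqrtr1 ltr_sqrt ?ltr01 // a_lt1. Qed.
Lemma b2 : b ^+ 2 = a. Proof. by rewrite sqr_sqrtr // ltW // a_gt0. Qed.

Lemma bound_ab n (D : R) : 0 <= D ->
  (b ^+ n)^-1 * (a ^+ n.+1 * D) <= b ^+ n.+1 * D.
Proof.
move=> D0; rewrite -b2 -exprM mulrA.
have -> : (2 * n.+1 = n + n.+2)%N by lia.
rewrite exprD mulrA mulVf ?mul1r ?expf_neq0 ?gt_eqF ?b_gt0 //.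
apply: ler_wpM2r => //; rewrite [X in X <= _]exprS; apply: ler_piMl.
  by rewrite exprn_ge0 // ltW // b_gt0.
by rewrite ltW // b_lt1.
Qed.

Lemma small_pow t : 0 < t -> exists M0, b ^+ M0 < t.
Proof.
move=> t0.
have hb : `|b| < 1 by rewrite ger0_norm ?b_lt1 // ltW // b_gt0.
have := cvg_expr hb; move/cvgrPdist_lt => /(_ t t0) [M0 _ hM].
exists M0; have := hM M0 (leqnn M0); rewrite /= sub0r normrN ger0_norm //.
by rewrite exprn_ge0 // ltW // b_gt0.
Qed.

Lemma small_tail C eps : 0 <= C -> 0 < eps -> exists M0, C * b ^+ M0 / (1 - b) < eps.
Proof.
move=> C0 e0.
have hb : 0 < 1 - b by rewrite subr_gt0 b_lt1.
have ht : 0 < eps * (1 - b) / (C + 1) by rewrite divr_gt0 ?mulr_gt0 // ltr_wpDl.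
have [M0 hM] := small_pow ht; exists M0.
rewrite ltr_pdivrMr //.
have hb0 : 0 <= b ^+ M0 by rewrite exprn_ge0 // ltW // b_gt0.
move: hM; rewrite ltr_pdivlMr ?ltr_wpDl // => hM.
nra.
Qed.


Lemma d_sym x y : d x y = d y x. Proof. by case: (cms_metric M) => _ [_ []]. Qed.
Lemma d_tri x y z : d x z <= d x y + d y z. Proof. by case: (cms_metric M) => _ [_ [_]]. Qed.
Lemma d_xx x : d x x = 0. Proof. by case: (cms_metric M) => _ [h _]; apply/h. Qed.
Lemma d_eq0 x y : d x y = 0 -> x = y. Proof. by case: (cms_metric M) => _ [h _]; move/h. Qed.

Lemma mconv_uniq (u : nat -> K) F F' : mconv d u F -> mconv d u F' -> F = F'.
Proof.
move=> h1 h2; apply: d_eq0; apply/eqP; rewrite eq_le d_ge0 andbT.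
apply/ler_addgt0Pr => e e0; rewrite add0r.
have e2 : 0 < e / 2 by rewrite divr_gt0.
have [M1 hM1] := h1 _ e2; have [M2 hM2] := h2 _ e2.
set n := maxn M1 M2.
apply: (le_trans (d_tri F (u n) F')).
rewrite d_sym (splitr e) ltW // ltrD //.
  by apply: hM1; rewrite leq_maxl.
by apply: hM2; rewrite leq_maxr.
Qed.

Section Tail.
Variables (u : nat -> K) (k : nat).
Hypothesis hu : forall n, (k <= n)%N -> d (u n.+1) (u n) <= b ^+ n.

Lemma T1 m p : (k <= m)%N -> (1 - b) * d (u m) (u (m + p)) <= b ^+ m - b ^+ (m + p).
Proof.
move=> hm; elim: p => [|p IH]; first by rewrite addn0 d_xx subrr mulr0.
have ht := hu (leq_trans hm (leq_addr p m)).
have htri := d_tri (u m) (u (m + p)) (u (m + p.+1)).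
rewrite addnS in htri ht *.
rewrite [d (u (m + p)) _]d_sym in htri.
have hb : 0 < 1 - b by rewrite subr_gt0 b_lt1.
apply: le_trans (ler_wpM2l (ltW hb) htri) _.
have h2 := ler_wpM2l (ltW hb) ht.
rewrite mulrDr exprS.
set X := d (u m) (u (m + p)) in IH *.
set Y := d (u (m + p).+1) (u (m + p)) in h2 *.
set Z := b ^+ (m + p) in IH h2 *.
nra.
Qed.

Lemma T1' m p : (k <= m)%N -> d (u m) (u (m + p)) <= b ^+ m / (1 - b).
Proof.
move=> hm; have hb : 0 < 1 - b by rewrite subr_gt0 b_lt1.
rewrite ler_pdivlMr // mulrC; apply: le_trans (T1 p hm) _.
by rewrite lerBlDr lerDl exprn_ge0 // ltW // b_gt0.
Qed.

Lemma tail_cauchy : mcauchy d u.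
Proof.
move=> e e0.
have [M1 hM1] := small_tail (ler0n _ 2) e0.
exists (maxn k M1) => n n' hn hn'.
set q := maxn k M1 in hn hn'.
have hq : (k <= q)%N by rewrite leq_maxl.
apply: le_lt_trans (d_tri (u n) (u q) (u n')) _.
rewrite d_sym -(subnKC hn) -(subnKC hn').
apply: le_lt_trans hM1.
have hb : 0 < 1 - b by rewrite subr_gt0 b_lt1.
apply: le_trans (lerD (T1' (n - q) hq) (T1' (n' - q) hq)) _.
have hq1 : b ^+ q <= b ^+ M1.
  by apply: ler_wiXn2l; [exact: ltW b_gt0 | exact: ltW b_lt1 | exact: leq_maxr].
rewrite -mulrDl; apply: ler_wpM2r; first by rewrite invr_ge0 ltW.
rewrite -mulr2n; lra.
Qed.

Lemma tail_lim F m : mconv d u F -> (k <= m)%N -> d F (u m) <= b ^+ m / (1 - b).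
Proof.
move=> hF hm; apply/ler_addgt0Pr => e e0.
have [M1 hM1] := hF e e0.
set n := maxn M1 m.
apply: le_trans (d_tri F (u n) (u m)) _.
have hmn : (m <= n)%N by rewrite leq_maxr.
rewrite addrC [d (u n) (u m)]d_sym [d F _]d_sym lerD //.
  by rewrite -(subnKC hmn); exact: T1'.
by rewrite ltW // hM1 // leq_maxl.
Qed.

End Tail.


Lemma agree_mono (s s' : Sig E) k1 k2 :
  agree_upto s s' k1 -> (k2 <= k1)%N -> agree_upto s s' k2.
Proof. by move=> h hk j hj; apply: h; apply: leq_trans hj hk. Qed.

Lemma dsig_cases (s s' : Sig E) :
  (s = s' /\ dsig R s s' = 0) \/
  exists n0, dsig R s s' = (2^-1) ^+ n0 /\ agree_upto s s' n0.
Proof.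
rewrite /dsig; case: pselect => [h|h].
  right; case: ex_minnP => n0 hn0 hmin; exists n0; split => //.
  case: n0 hn0 hmin => [|n'] hn0 hmin; first by move=> j.
  apply/not_notP => hna.
  have := hmin n' (introN (asboolP _) hna); by rewrite ltnn.
left; split => //; apply/funext => j.
have : agree_upto s s' `|j|.+1.
  by apply/not_notP => hn; apply: h; exists `|j|%N.
by move/(_ j (ltnSn _)).
Qed.

Lemma half_gt0 : 0 < (2^-1 : R). Proof. by rewrite invr_gt0 ltr0n. Qed.
Lemma half_lt1 : (2^-1 : R) < 1. Proof. by rewrite invf_lt1 ?ltr0n // ltr1n. Qed.

Lemma dsig_lt (s s' : Sig E) k : dsig R s s' < (2^-1) ^+ k -> agree_upto s s' k.
Proof.
case: (dsig_cases s s') => [[-> _]|[n0 [-> ha]]]; first by [].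
rewrite ltr_iXn2l ?half_gt0 ?half_lt1 // => hk.
exact: agree_mono ha (ltnW hk).
Qed.


Lemma Pout_cover (us : 'I_N -> K) (B : set (Sig E)) (Pf : nat -> pred (seq E)) C M0 :
  0 <= C ->
  (forall m i, \sum_(l <- words m.+1 | Pf m l) pcyl M (us i) l <= C * b ^+ m) ->
  B `<=` \bigcup_m wset (- m%:Z) m.+1 (fun l => (M0 <= m)%N && Pf m l) ->
  (Pout Pm us B <= (C * b ^+ M0 / (1 - b))%:E)%E.
Proof.
move=> C0 hb hB.
apply: le_trans (Pout_le us (fun n => Asig_wset n _) hB) _.
apply: series_geo_le => //; [exact: b_gt0 | exact: b_lt1 | move=> n | move=> n].
  by apply: Phim_ge0; rewrite ?oppr_le0 //; exact: Asig_wset.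
apply: Phim_wset => //.
  by case: ifP => // _; rewrite mulr_ge0 // exprn_ge0 // ltW // b_gt0.
by move=> i; rewrite sum_andb; case: ifP => // _; exact: hb.
Qed.

Lemma Y0_agree (e0 : E) us (s s' : Sig E) K' n : agree_upto s s' K' -> (n < K')%N ->
  Y0 M us n s = Y0 M us n s'.
Proof.
move=> ha hn; rewrite !(Y0_wd e0); congr Yw.
apply/eq_in_map => j; rewrite mem_iota add0n => /andP [_ hj]; apply: ha.
rewrite addrC -opprB subzn // abszN absz_nat.
exact: leq_ltn_trans (leq_subr j n) hn.
Qed.

Lemma behead_wd n (s : Sig E) : behead (wd (- n.+1%:Z) n.+2 s) = wd (- n%:Z) n.+1 s.
Proof.
rewrite wdS /=.
have -> : - n.+1%:Z + 1 = - n%:Z by rewrite -addn1 PoszD opprD -addrA addNr addr0.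
by [].
Qed.

Definition alpha : R := ln b / ln (2^-1).
Definition Cst : R := 2 / (b * (1 - b)).

Lemma alpha_gt0 : 0 < alpha.
Proof.
rewrite /alpha -divrNN divr_gt0 // oppr_gt0 ln_lt0 //.
  by rewrite b_gt0 b_lt1.
by rewrite half_gt0 half_lt1.
Qed.

Lemma Cst_gt0 : 0 < Cst.
Proof. by rewrite /Cst divr_gt0 // mulr_gt0 ?b_gt0 // subr_gt0 b_lt1. Qed.

Lemma powR_half n : ((2^-1) ^+ n) `^ alpha = b ^+ n.
Proof.
rewrite /powR expf_eq0 gt_eqF ?half_gt0 ?andbF //.
rewrite lnXn ?half_gt0 // mulrnAr /alpha mulfVK; last by rewrite lt_eqF // ln_lt0 // half_gt0 half_lt1.
by rewrite -mulr_natl expRM_natl lnK // posrE b_gt0.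
Qed.


Section Main.
Variable e0 : E.
Variables (xs ys : 'I_N -> K).
Hypothesis hxs : forall i, Kp i (xs i).
Hypothesis hys : forall i, Kp i (ys i).

Local Notation Yw := (Yw e0).

Definition D1 : R := \sum_i d (xs i) (ys i).
Definition P1 (m : nat) : pred (seq E) := fun l => b ^+ m < d (Yw xs l) (Yw ys l).
Definition P2 (m : nat) : pred (seq E) := fun l =>
  if m is n.+1 then b ^+ n < d (Yw xs l) (Yw xs (behead l)) else false.
Definition Q (k : nat) : set (Sig E) :=
  [set s | forall n, (k <= n)%N -> d (Y0 M xs n.+1 s) (Y0 M xs n s) <= b ^+ n].
Definition B1 : set (Sig E) :=
  [set s | forall M0, exists2 n, (M0 <= n)%N & b ^+ n < d (Y0 M xs n s) (Y0 M ys n s)].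
Definition Bad : set (Sig E) := B1 `|` [set s | forall k, ~ Q k s].

Lemma D1_ge0 : 0 <= D1. Proof. by apply: sumr_ge0 => i _; exact: d_ge0. Qed.
Lemma Dc_ge0 : 0 <= Dc xs. Proof. by apply: sumr_ge0 => i _; exact: d_ge0. Qed.

Lemma bnd1 m i : \sum_(l <- words m.+1 | P1 m l) pcyl M (xs i) l <= D1 * b ^+ m.
Proof.
have bm : 0 < b ^+ m by rewrite exprn_gt0 // b_gt0.
apply: le_trans (markov (xs i) m.+1 bm (fun l => d_ge0 _ _)) _.
have ib : 0 <= (b ^+ m)^-1 by rewrite invr_ge0 ltW.
apply: le_trans (ler_wpM2l ib (E1 e0 hxs hys i m)) _.
apply: le_trans (bound_ab m (d_ge0 _ _)) _.
rewrite mulrC; apply: ler_pM.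
- exact: d_ge0.
- by rewrite exprn_ge0 // ltW // b_gt0.
- by rewrite /D1 (bigD1 i) //= lerDl; apply: sumr_ge0 => ? _; exact: d_ge0.
- by rewrite exprS ler_piMl ?exprn_ge0 ?ltW ?b_gt0 ?b_lt1.
Qed.


Lemma bnd2 m i : \sum_(l <- words m.+1 | P2 m l) pcyl M (xs i) l <= Dc xs * b ^+ m.
Proof.
case: m => [|n].
  by rewrite big_pred0 // expr0 mulr1 Dc_ge0.
have bn : 0 < b ^+ n by rewrite exprn_gt0 // b_gt0.
apply: le_trans (markov (g := fun l => d (Yw xs l) (Yw xs (behead l)))
   (xs i) n.+2 bn (fun l => d_ge0 _ _)) _.
have ib : 0 <= (b ^+ n)^-1 by rewrite invr_ge0 ltW.
apply: le_trans (ler_wpM2l ib (E3 e0 hxs i n)) _.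
by rewrite [Dc xs * _]mulrC; apply: bound_ab; exact: Dc_ge0.
Qed.

Lemma notQ k s : ~ Q k s ->
  exists2 n, (k <= n)%N & P2 n.+1 (wd (- n.+1%:Z) n.+2 s).
Proof.
move/existsNP => [n /not_implyP [hkn hn]]; exists n => //.
rewrite /P2 behead_wd -!Y0_wd ltNge; exact/negP.
Qed.

Lemma notB1 s : ~ B1 s ->
  exists M0, forall n, (M0 <= n)%N -> d (Y0 M xs n s) (Y0 M ys n s) <= b ^+ n.
Proof.
move/existsNP => [M0 hM0]; exists M0 => n hn.
rewrite leNgt; apply/negP => hlt; apply: hM0; by exists n.
Qed.

Lemma Bad_null : Pout Pm xs Bad = 0%E.
Proof.
apply: Pout_eq0 => eps e0'.
have C0 : 0 <= D1 + Dc xs by rewrite addr_ge0 ?D1_ge0 ?Dc_ge0.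
have [M0 hM0] := small_tail C0 e0'.
apply: le_trans (@Pout_cover xs Bad (fun m l => P1 m l || P2 m l) _ M0 C0 _ _) _.
- move=> m i; apply: le_trans (sum_orb_le _ _ _ (fun l => pcyl_ge0 _ _)) _.
  by rewrite mulrDl lerD ?bnd1 ?bnd2.
- move=> s [hs|hs].
    have [n hn hd] := hs M0; exists n => //.
    by rewrite /wset /= hn /P1 -!Y0_wd hd.
  have [n hn hd] := notQ (hs M0); exists n.+1 => //.
  by apply/andP; split; [exact: ltnW | apply/orP; right].
- by rewrite lee_fin ltW.
Qed.

Lemma Q_tail k : (Pout Pm xs (~` Q k) <= (Dc xs * b ^+ k.+1 / (1 - b))%:E)%E.
Proof.
apply: Pout_cover; first exact: Dc_ge0.
  by move=> m i; exact: bnd2.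
move=> s /notQ [n hn hd]; exists n.+1 => //.
by apply/andP; split.
Qed.

Lemma Q_cauchy k s : Q k s -> exists F, mconv d (fun n => Y0 M xs n s) F.
Proof. by move=> hq; exact: (cms_complete (tail_cauchy (u := fun n => Y0 M xs n s) hq)). Qed.

Lemma Q_closed k : sig_closed R (Q k).
Proof.
move=> s hs n hn.
have [s' hs'Q hd] := hs _ (exprn_gt0 n.+2 half_gt0).
have ha := dsig_lt hd.
rewrite (Y0_agree e0 xs ha (n := n.+1)) // (Y0_agree e0 xs ha (n := n)) //.
exact: hs'Q.
Qed.

Lemma holder k s s' F F' : Q k s -> Q k s' -> dsig R s s' <= (2^-1) ^+ k.+1 ->
  mconv d (fun n => Y0 M xs n s) F -> mconv d (fun n => Y0 M xs n s') F' ->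
  d F F' <= Cst * (dsig R s s') `^ alpha.
Proof.
move=> hq hq' hds hF hF'.
case: (dsig_cases s s') hds => [[eq _]|[n0 [-> ha]]] hds.
  subst s'; rewrite (mconv_uniq hF hF') d_xx.
  by rewrite mulr_ge0 ?powR_ge0 // ltW // Cst_gt0.
move: hds; rewrite ler_iXn2l ?half_gt0 ?half_lt1 //.
case: n0 ha => [//|m] ha hkm.
have heq := Y0_agree e0 xs ha (ltnSn m).
apply: le_trans (d_tri F (Y0 M xs m s) F') _.
rewrite heq [d _ F']d_sym.
have := lerD (tail_lim (u := fun n => Y0 M xs n s) hq hF hkm) (tail_lim (u := fun n => Y0 M xs n s') hq' hF' hkm).
rewrite heq => h; apply: le_trans h _.
rewrite powR_half /Cst exprS.
have b0 := b_gt0; have b1 : 0 < 1 - b by rewrite subr_gt0 b_lt1.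
have -> : 2 / (b * (1 - b)) * (b * b ^+ m) = b ^+ m / (1 - b) + b ^+ m / (1 - b).
  by field; rewrite gt_eqF // gt_eqF.
by [].
Qed.


Lemma mconv_close (u v : nat -> K) F M0 : mconv d u F ->
  (forall n, (M0 <= n)%N -> d (u n) (v n) <= b ^+ n) -> mconv d v F.
Proof.
move=> hu hb e ep.
have e2 : 0 < e / 2 by rewrite divr_gt0.
have [M1 hM1] := hu _ e2; have [M2 hM2] := small_pow e2.
exists (maxn (maxn M1 M0) M2) => n hn.
have h1 : (M1 <= n)%N by apply: leq_trans hn; rewrite leq_max leq_maxl.
have h0 : (M0 <= n)%N by apply: leq_trans hn; rewrite leq_max leq_maxr.
have h2 : (M2 <= n)%N by apply: leq_trans hn; rewrite leq_maxr.
apply: le_lt_trans (d_tri (v n) (u n) F) _.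
rewrite (splitr e) d_sym ltrD ?hM1 //.
apply: le_lt_trans (hb n h0) _; apply: le_lt_trans hM2.
by apply: ler_wiXn2l => //; [exact: ltW b_gt0 | exact: ltW b_lt1].
Qed.

Lemma cvg_bound (f : nat -> R) M0 : (forall n, 0 <= f n) ->
  (forall n, (M0 <= n)%N -> f n <= b ^+ n) -> f @ \oo --> (0 : R).
Proof.
move=> f0 fb; apply/cvgrPdist_lt => e ep.
have [M1 hM1] := small_pow ep.
near=> n.
have hn : (maxn M0 M1 <= n)%N by near: n; exists (maxn M0 M1).
rewrite sub0r normrN ger0_norm //.
apply: le_lt_trans (fb n (leq_trans (leq_maxl _ _) hn)) _.
apply: le_lt_trans hM1.
apply: ler_wiXn2l; [exact: ltW b_gt0 | exact: ltW b_lt1 | exact: leq_trans (leq_maxr _ _) hn].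
Unshelve. all: by end_near.
Qed.

End Main.

End Part1.


Unset Implicit Arguments.

Theorem lemma3 (R : realType) (K : Type) (E : finType) (N : nat)
  (M : CMS R K E N) (Pm : int -> K -> set (Sig E) -> \bar R)
  (xs ys : 'I_N -> K) :
  is_Pfamily M Pm ->
  (forall i, cms_Kp M i (xs i)) -> (forall i, cms_Kp M i (ys i)) ->
  (* (i) *)
  (exists B, Pout Pm xs B = 0%E /\
     forall s, ~ B s ->
       (fun n => cms_d M (Y0 M xs n s) (Y0 M ys n s)) @ \oo --> (0 : R)) /\
  (* (ii) *)
  (exists B, Pout Pm xs B = 0%E /\
     forall s, ~ B s -> exists F,
       mconv (cms_d M) (fun n => Y0 M xs n s) F /\
       mconv (cms_d M) (fun n => Y0 M ys n s) F) /\
  (* (iii) *)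
  (exists (Q : nat -> set (Sig E)) (alpha C : R),
     (forall k, sig_closed R (Q k)) /\
     (forall k, Q k `<=` Q k.+1) /\
     (\sum_(0 <= k <oo) Pout Pm xs (~` Q k) < +oo)%E /\
     0 < alpha /\ 0 < C /\
     forall k, exists2 delta : R, 0 < delta &
       (forall s, Q k s -> exists F, mconv (cms_d M) (fun n => Y0 M xs n s) F) /\
       (forall s s' F F', Q k s -> Q k s' -> dsig R s s' <= delta ->
          mconv (cms_d M) (fun n => Y0 M xs n s) F ->
          mconv (cms_d M) (fun n => Y0 M xs n s') F' ->
          cms_d M F F' <= C * (dsig R s s') `^ alpha)).
Proof.
move=> hP hx hy.
case: (pickP (@predT E)) => [e0 _|hE]; last first.
  have hP0 : forall B, Pout Pm xs B = 0%E.
    move=> B; apply/eqP; rewrite eq_le (Pout_ge0 hP) andbT.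
    have := @Pout_cover _ _ _ _ M Pm hP xs B (fun _ _ => false) 0 0 (lexx 0) _ _.
    rewrite !mul0r; apply.
      by move=> m i; rewrite big_pred0 // mul0r.
    by move=> s; have := hE (s 0).
  split; [|split].
  - by exists setT; split => // s; have := hE (s 0).
  - by exists setT; split => // s; have := hE (s 0).
  exists (fun _ => set0), 1, 1; split; first by move=> k s _; have := hE (s 0).
  split; first by move=> k s.
  split.
    under eq_fun do rewrite hP0.
    rewrite eseries0 ?ltry // => n _ _; exact: hP0.
  split; first exact: ltr01.
  split; first exact: ltr01.
  by move=> k; exists 1 => //; split => s; have := hE (s 0).
have hnull := Bad_null hP e0 hx hy.
split; [|split].
- exists (Bad M xs ys); split => // s hs.
  have [M0 hM0] := notB1 (fun h => hs (or_introl h)).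
  apply: (cvg_bound (M := M) (M0 := M0)) => // n; exact: d_ge0.
- exists (Bad M xs ys); split => // s hs.
  have [k hk] : exists k, Q M xs k s.
    apply: contrapT => hn; apply: hs; right => k hk; apply: hn; by exists k.
  have [F hF] := Q_cauchy hk; exists F; split => //.
  have [M0 hM0] := notB1 (fun h => hs (or_introl h)).
  exact: mconv_close hF hM0.
exists (Q M xs), (alpha M), (Cst M); split.
  move=> k; exact: (Q_closed e0).
split.
  by move=> k s hs n hn; apply: hs; exact: ltnW.
split.
  have b0 := b_gt0 M; have b1 : 0 < 1 - b M by rewrite subr_gt0 b_lt1.
  apply: le_lt_trans (ltry ((Dc M xs * b M / (1 - b M)) * (b M) ^+ 0 / (1 - b M)))%R.
  apply: series_geo_le => //.
  - apply: mulr_ge0; [apply: mulr_ge0; [exact: Dc_ge0 | exact: ltW] | by rewrite invr_ge0 ltW].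
  - exact: b_lt1.
  - by move=> n; exact: (Pout_ge0 hP).
  - move=> n /=; apply: le_trans (Q_tail hP e0 hx n) _.
    rewrite lee_fin exprS.
    by rewrite mulrA mulrAC.
split; first exact: alpha_gt0.
split; first exact: Cst_gt0.
move=> k; exists ((2^-1) ^+ k.+1); first exact: exprn_gt0 (half_gt0 _).
split; first by move=> s hs; exact: Q_cauchy hs.
by move=> s s' F F' hs hs' hd hF hF'; exact: (holder e0 hs hs' hd hF hF').
Qed.
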